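(* Let $\mathcal{C}$ be an $[n,k]_q$ MWS code such that for every $c\in\mathcal{C}\setminus\{0\}$ the entries of $V(c)$ are pairwise distinct. Then for each $i\in\{1,\dots,q-1\}$ there exists a non-zero $r=(r_1,\dots,r_{q-1})\in\mathbb{N}^{q-1}$ such that $$\sum_{j=1}^{q-1} r_j\left(a[\alpha^{i-j}]-b[\alpha^{i-j}]\right)\neq 0\quad\text{for all } a,b\in\mathcal{C},\ a\ne b.$$
   Context: $\alpha$ is a fixed primitive element of $\mathbb{F}_q$ (exponents modulo $q-1$), $\mathbb{N}=\{0,1,2,\dots\}$. An $[n,k]_q$ code is a $k$-dimensional subspace of $\mathbb{F}_q^n$ (non-degenerate if $k\ge2$); it is MWS if it has exactly $\frac{q^k-1}{q-1}$ distinct non-zero Hamming weights. For $c\in\mathbb{F}_q^n$, $\beta\in\mathbb{F}_q$, $c[\beta]=|\{l:c_l=\beta\}|$ and $V(c)=(c[\alpha],\dots,c[\alpha^{q-1}],c[0])$. *)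

(* Defs.v *)
From HB Require Import structures.
From mathcomp Require Import all_boot all_order all_algebra.
Set Implicit Arguments. Unset Strict Implicit. Unset Printing Implicit Defensive.
Import GRing.Theory.
Local Open Scope ring_scope.

Section Defs.
Variable F : finFieldType.
Variable n : nat.

Definition wt (c : 'rV[F]_n) : nat := #|[set l : 'I_n | c 0 l != 0]|.

Definition cnt (c : 'rV[F]_n) (beta : F) : nat := #|[set l : 'I_n | c 0 l == beta]|.

(* V(c) = (c[alpha], ..., c[alpha^(q-1)], c[0]), indexed by 'I_q, q = #|F| *)
Definition Vvec (alpha : F) (c : 'rV[F]_n) : 'I_#|F| -> nat :=
  fun j => if (val j < #|F|.-1)%N then cnt c (alpha ^+ (val j).+1) else cnt c 0.

Definition is_code (k : nat) (C : {vspace 'rV[F]_n}) : Prop :=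
  \dim C = k /\
  ((2 <= k)%N -> forall l : 'I_n, exists2 c, c \in C & c 0 l != 0).

Definition MWS (k : nat) (C : {vspace 'rV[F]_n}) : Prop :=
  size (undup [seq wt c | c <- enum [pred c : 'rV[F]_n | (c \in C) && (c != 0)]]) =
    ((#|F| ^ k - 1) %/ (#|F| - 1))%N.
End Defs.

(* Main.v *)
Require Import Defs.
From HB Require Import structures.
From mathcomp Require Import all_boot all_order all_algebra finfield.
Import GRing.Theory.
Local Open Scope ring_scope.
Set Implicit Arguments. Unset Strict Implicit.

Lemma digits_inj (B m : nat) (x y : nat -> nat) :
  (forall j, (j < m)%N -> (x j < B)%N) -> (forall j, (j < m)%N -> (y j < B)%N) ->
  (\sum_(j < m) B ^ j * x j = \sum_(j < m) B ^ j * y j)%N ->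
  forall j, (j < m)%N -> x j = y j.
Proof.
elim: m x y => [|m IH] x y hx hy hs j hj //.
rewrite !big_ord_recl /= !expn0 !mul1n in hs.
have E : forall z : nat -> nat, (\sum_(i < m) B ^ (bump 0 i) * z (bump 0 i) =
   B * \sum_(i < m) B ^ i * z i.+1)%N.
  move=> z; rewrite big_distrr /=; apply: eq_bigr => i _.
  by rewrite /bump /= add1n expnS mulnA.
rewrite !E in hs.
have hx0 := hx 0%N (ltn0Sn _); have hy0 := hy 0%N (ltn0Sn _).
have e0 : x 0%N = y 0%N.
  have := congr1 (modn^~ B) hs.
  by rewrite ![(_ + B * _)%N]addnC ![(B * _)%N]mulnC !modnMDl !modn_small.
have hB : (0 < B)%N by apply: leq_ltn_trans hx0.
move: hs; rewrite e0 => /addnI /eqP; rewrite eqn_pmul2l // => /eqP hs.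
case: j hj => [|j] hj //.
apply: (IH (fun i => x i.+1) (fun i => y i.+1)) => //.
- by move=> i hi; apply: hx.
- by move=> i hi; apply: hy.
Qed.

Section S.
Variable F : finFieldType.
Variable n : nat.
Implicit Types c : 'rV[F]_n.

Lemma cnt_le c b : (cnt c b <= n)%N.
Proof. by rewrite /cnt -[X in (_ <= X)%N]card_ord max_card. Qed.

Lemma wt_sum c : wt c = (\sum_(b : F | b != 0%R) cnt c b)%N.
Proof.
rewrite /wt /cnt -sum1_card.
rewrite (partition_big (fun l => c 0 l) (fun b => b != 0)); last by move=> l; rewrite inE.
apply: eq_bigr => b hb; rewrite -sum1_card; apply: eq_bigl => l.
rewrite !inE; case: eqP => // ->; rewrite ?hb ?andbT //.
by rewrite eq_sym (negbTE hb).
Qed.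

Lemma wt0 c : wt c = 0%N -> c = 0.
Proof.
move=> /eqP; rewrite /wt cards_eq0 => /eqP h; apply/rowP => j; rewrite mxE.
apply/eqP/negPn/negP => hj.
have : j \in [set l : 'I_n | c 0 l != 0] by rewrite inE.
by rewrite h inE.
Qed.

Lemma wtZ x c : x != 0 -> wt (x *: c) = wt c.
Proof.
move=> hx; rewrite /wt; apply: eq_card => l; rewrite !inE mxE mulf_eq0 negb_or hx //.
Qed.

Lemma cntZ x c b : x != 0 -> cnt (x *: c) b = cnt c (b / x).
Proof.
move=> hx; rewrite /cnt; apply: eq_card => l; rewrite !inE mxE.
apply/eqP/eqP => [<-|->]; first by rewrite mulrAC mulfV // mul1r.
by rewrite mulrCA mulfV // mulr1.
Qed.

Lemma pow_all (alpha : F) (N : nat) : N = #|F|.-1 -> N.-primitive_root alpha -> (0 < N)%N ->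
  forall b : F, b != 0 -> exists j : nat, (j < N)%N /\ alpha ^+ j.+1 = b.
Proof.
move=> hNF ha hN b hb.
have cF : #|F| = N.+1 by rewrite hNF prednK //; apply/card_gt0P; exists 0.
have bN : b ^+ N = 1.
  have := expf_card b; rewrite cF exprS => h.
  by apply: (mulfI hb); rewrite mulr1.
have [e he] := prim_rootP ha bN.
case: e he => [[|e] he] /= ->.
  exists N.-1; rewrite prednK // (prim_expr_order ha) expr0; split=> //.
by exists e; split=> //; apply: ltnW.
Qed.

Lemma mws_scalar k (C : {vspace 'rV[F]_n}) : is_code k C -> MWS k C ->
  forall a b, a \in C -> b \in C -> a != 0 -> b != 0 -> wt a = wt b ->
  exists2 l : F, l != 0 & b = l *: a.
Proof.
move=> [hdim _] hM.
set Pp := [pred c : 'rV[F]_n | (c \in C) && (c != 0)].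
set L := [seq wt c | c <- enum Pp].
set W := undup L.
set s := size W.
have hq : (1 < #|F|)%N := finNzRing_gt1 F.
have hq1 : (0 < #|F|.-1)%N by rewrite -subn1 subn_gt0.
have hcardP : #|Pp| = (#|F| ^ k).-1.
  have := card_vspace C; rewrite hdim (cardD1 0) mem0v add1n => <- /=.
  by apply: eq_card => c; rewrite !inE andbC.
have hs : (s * #|F|.-1 = (#|F| ^ k).-1)%N.
  rewrite /s hM !subn1 predn_exp mulKn // mulnC //.
pose rep (t : nat) := nth 0 (enum Pp) (index (nth 0%N W t) L).
have hrep : forall t, (t < s)%N -> rep t \in Pp /\ wt (rep t) = nth 0%N W t.
  move=> t ht; have hW : nth 0%N W t \in L by rewrite -mem_undup mem_nth.
  have hi : (index (nth 0%N W t) L < size (enum Pp))%N by rewrite -(size_map (@wt F n)) index_mem.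
  split; first by rewrite -mem_enum mem_nth.
  have := nth_map 0 0%N (@wt F n) hi; by rewrite -/L nth_index.
pose D := setX [set: 'I_s] [set~ (0:F)].
pose g := fun p : 'I_s * F => p.2 *: rep p.1.
have ginj : {in D &, injective g}.
  move=> [t1 x1] [t2 x2]; rewrite !inE /= => hx1 hx2 E.
  have [h1 w1] := hrep t1 (ltn_ord t1); have [h2 w2] := hrep t2 (ltn_ord t2).
  have ht : t1 = t2.
    apply/val_inj/eqP; rewrite -(nth_uniq 0%N (ltn_ord t1) (ltn_ord t2) (undup_uniq L)).
    rewrite -/W -w1 -w2 -(wtZ (rep t1) hx1) -(wtZ (rep t2) hx2).
    by move: E; rewrite /g /= => ->.
  subst t2; congr pair.
  move: h1; rewrite inE => /andP [_ hr].
  move/eqP: E; rewrite /g /= -subr_eq0 -scalerBl scaler_eq0 (negbTE hr) orbF subr_eq0.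
  by move/eqP.
have hI : [set g p | p in D] = [set c | Pp c].
  apply/eqP; rewrite eqEcard; apply/andP; split.
    apply/subsetP => c /imsetP [[t x]]; rewrite !inE /= => hx ->.
    have [h1 _] := hrep t (ltn_ord t).
    move: h1; rewrite inE /= => /andP [h1 h2].
    by rewrite /g /= scaler_eq0 negb_or hx h2 andbT rpredZ.
  rewrite card_in_imset // cardsX cardsT card_ord cardsC1 hs -hcardP.
  by apply: eq_leq; apply: eq_card => c; rewrite inE.
move=> a b ha hb a0 b0 hw.
have : a \in [set g p | p in D] by rewrite hI inE /= ha a0.
case/imsetP => [[t x]]; rewrite !inE /= => hx ea.
have : b \in [set g p | p in D] by rewrite hI inE /= hb b0.
case/imsetP => [[t' y]]; rewrite !inE /= => hy eb.
move: hw; rewrite ea eb /g /= (wtZ _ hx) (wtZ _ hy).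
have [_ ->] := hrep t (ltn_ord t); have [_ ->] := hrep t' (ltn_ord t').
move/eqP; rewrite (nth_uniq 0%N (ltn_ord t) (ltn_ord t') (undup_uniq L)) => /eqP/val_inj ht.
subst t'; exists (y / x); first by rewrite mulf_neq0 ?invr_neq0.
by rewrite scalerA divfK.
Qed.

End S.

Lemma wt_zero (F : finFieldType) n : wt (0 : 'rV[F]_n) = 0%N.
Proof. apply/eqP; rewrite cards_eq0; apply/eqP/setP => l; rewrite !inE mxE eqxx. by []. Qed.

Lemma key (F : finFieldType) (alpha : F) (halpha : (#|F|.-1).-primitive_root alpha)
  (hN : (0 < #|F|.-1)%N) n k (C : {vspace 'rV[F]_n}) (hC : is_code k C) (hMWS : MWS k C)
  (hV : forall c : 'rV[F]_n, c \in C -> c != 0 -> injective (Vvec alpha c))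
  a b : a \in C -> b \in C -> (forall β, β != 0 -> cnt a β = cnt b β) -> a = b.
Proof.
move=> ha hb heq; case: (eqVneq a b) => // hab; exfalso.
have hw : wt a = wt b by rewrite !wt_sum; apply: eq_bigr => β hβ; exact: heq.
have a0 : a != 0.
  by apply: contraNneq hab => a0; move: hw; rewrite a0 wt_zero => /esym/wt0 ->.
have b0 : b != 0.
  by apply: contraNneq hab => b0; move: hw; rewrite b0 wt_zero => /wt0 ->.
have [l hl ebl] := mws_scalar hC hMWS ha hb a0 b0 hw.
have hl1 : l != 1 by apply: contraNneq hab => l1; rewrite ebl l1 scale1r.
have a_ne0 : alpha != 0.
  apply/negP => /eqP a0'; have := prim_expr_order halpha.
  by rewrite a0' expr0n eqn0Ngt hN => /esym/eqP; rewrite oner_eq0.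
have hal : alpha / l != 0 by rewrite mulf_neq0 ?invr_neq0.
have [j [hj ej]] := pow_all (erefl _) halpha hN hal.
have c1 : cnt a alpha = cnt a (alpha / l) by rewrite heq // ebl cntZ.
have hj' : (j < #|F|)%N by apply: leq_trans hj (leq_pred _).
have h0' : (0 < #|F|)%N by apply: leq_trans hN (leq_pred _).
have := hV a ha a0 (Ordinal hj') (Ordinal h0').
rewrite /Vvec /= hj hN expr1 ej -c1 => /(_ erefl) [] j0.
move: ej; rewrite j0 expr1 => /eqP; rewrite eq_sym -[X in _ == X]mulr1 (inj_eq (mulfI a_ne0)).
by rewrite invr_eq1 (negbTE hl1).
Qed.

Theorem mainTheorem7 (F : finFieldType) (alpha : F)
  (halpha : (#|F|.-1).-primitive_root alpha)
  (n k : nat) (C : {vspace 'rV[F]_n})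
  (hC : is_code k C) (hMWS : MWS k C)
  (hV : forall c : 'rV[F]_n, c \in C -> c != 0 -> injective (Vvec alpha c))
  (i : nat) (hi : (1 <= i <= #|F|.-1)%N) :
  exists r : 'I_(#|F|.-1) -> nat,
    (exists j, r j != 0%N) /\
    forall a b : 'rV[F]_n, a \in C -> b \in C -> a != b ->
      \sum_(j < #|F|.-1)
         (r j)%:Z * ((cnt a (alpha ^ (i%:Z - (j.+1)%:Z)))%:Z
                     - (cnt b (alpha ^ (i%:Z - (j.+1)%:Z)))%:Z) != 0.
Proof.
have hN : (0 < #|F|.-1)%N by case/andP: hi => h1 h2; apply: leq_trans h2.
have a_ne0 : alpha != 0.
  apply/negP => /eqP a0'; have := prim_expr_order halpha.
  by rewrite a0' expr0n eqn0Ngt hN => /esym/eqP; rewrite oner_eq0.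
exists (fun j : 'I_(#|F|.-1) => (n.+1) ^ j)%N; split.
  by exists (Ordinal hN); rewrite expn0.
move=> a b ha hb hab.
pose xa (j : nat) := cnt a (alpha ^ (i%:Z - (j.+1)%:Z)).
pose xb (j : nat) := cnt b (alpha ^ (i%:Z - (j.+1)%:Z)).
have E : \sum_(j < #|F|.-1)
         ((n.+1) ^ j)%N%:Z * ((cnt a (alpha ^ (i%:Z - (j.+1)%:Z)))%:Z
                     - (cnt b (alpha ^ (i%:Z - (j.+1)%:Z)))%:Z) =
   (\sum_(j < #|F|.-1) (n.+1) ^ j * xa j)%N%:Z - (\sum_(j < #|F|.-1) (n.+1) ^ j * xb j)%N%:Z.
  rewrite !(big_morph Posz PoszD (erefl _)) -sumrB; apply: eq_bigr => j _.
  by rewrite !PoszM mulrBr.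
rewrite E subr_eq0 eqz_nat; apply/negP => /eqP hsum.
have hd : forall j, (j < #|F|.-1)%N -> xa j = xb j.
  by apply: (digits_inj _ _ hsum) => j _; rewrite ltnS; exact: cnt_le.
apply: (negP hab); apply/eqP; apply: (key halpha hN hC hMWS hV ha hb) => β hβ.
have hg : alpha ^+ i / β != 0 by rewrite mulf_neq0 ?invr_neq0 ?expf_neq0.
have [j [hj ej]] := pow_all (erefl _) halpha hN hg.
have eb : alpha ^ (i%:Z - (j.+1)%:Z) = β.
  rewrite expfzDr // -exprnN ej invf_div mulrC divfK //.
  by rewrite expf_neq0.
rewrite -eb; exact: hd j hj.
Qed.
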